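(* For every positive integer $m$, $d(m)=|N/P_{J(m)}|$, where $N$ is the multiplicative semigroup of all positive integers, $J(m)=mN$ is the ideal of $N$ generated by $m$, and $P_{J(m)}$ is the principal congruence on $N$ defined by $J(m)$.
   Context: $d(m)$ is the number of positive divisors of $m$. For a semigroup $S$, $H\subseteq S$, $a\in S$: $H\dots a=\{(x,y)\in S\times S: xay\in H\}$ and $P_H=\{(a,b)\in S\times S: H\dots a=H\dots b\}$. *)

(* Defs.v *)
From mathcomp Require Import all_boot.

Definition d (m : nat) : nat := size (divisors m).

(* The semigroup N = positive integers under multiplication; subsets of N
   are predicates on nat (only their values on positive integers matter). *)

Definition J (m : nat) : nat -> Prop := fun h => exists k, 0 < k /\ h = m * k.

Definition resid (H : nat -> Prop) (a : nat) : nat -> nat -> Prop :=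
  fun x y => 0 < x /\ 0 < y /\ H (x * a * y).

Definition PH (H : nat -> Prop) (a b : nat) : Prop :=
  0 < a /\ 0 < b /\ (forall x y, resid H a x y <-> resid H b x y).

Definition cls (H : nat -> Prop) (a : nat) : nat -> Prop := fun b => PH H a b.

Definition quot_card (H : nat -> Prop) (n : nat) : Prop :=
  exists f : 'I_n -> (nat -> Prop),
    injective f /\
    (forall i, exists a, 0 < a /\ f i = cls H a) /\
    (forall a, 0 < a -> exists i, f i = cls H a).

(* Main.v *)
Require Import Defs.
From mathcomp Require Import all_boot.
From Stdlib Require Import FunctionalExtensionality PropExtensionality.

Lemma key m a n : 0 < m -> (m %| a * n) = (m %/ gcdn a m %| n).
Proof.
move=> m0; set g := gcdn a m.
have g0 : 0 < g by rewrite gcdn_gt0 m0 orbT.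
have hm : m = (m %/ g) * g by rewrite divnK // dvdn_gcdr.
have ha : a = (a %/ g) * g by rewrite divnK // dvdn_gcdl.
have co : coprime (m %/ g) (a %/ g).
  rewrite /coprime gcdnC; apply/eqP; apply/eqP; rewrite -(eqn_pmul2r g0).
  by rewrite mul1n muln_gcdl -ha -hm.
rewrite {1}hm {1}ha mulnAC dvdn_pmul2r //.
by rewrite Gauss_dvdr.
Qed.

Lemma Jdiv m h : 0 < m -> 0 < h -> (J m h <-> m %| h).
Proof.
move=> m0 h0; split.
  by case=> k [_ ->]; apply: dvdn_mulr.
move=> dv; exists (h %/ m); split.
  by rewrite divn_gt0 // dvdn_leq.
by rewrite mulnC divnK.
Qed.

Lemma residE m a x y : 0 < m -> 0 < a ->
  (resid (J m) a x y <-> [/\ 0 < x, 0 < y & m %/ gcdn a m %| x * y]).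
Proof.
move=> m0 a0; rewrite /resid; split.
  case=> x0 [y0 hJ]; split => //.
  rewrite -key // mulnCA mulnA; apply/Jdiv => //.
  by rewrite !muln_gt0 x0 a0 y0.
case=> x0 y0 dv; split => //; split => //; apply/Jdiv => //.
  by rewrite !muln_gt0 x0 a0 y0.
by rewrite -mulnA mulnCA key.
Qed.

Lemma gcd_pos a m : 0 < m -> 0 < gcdn a m.
Proof. by move=> m0; rewrite gcdn_gt0 m0 orbT. Qed.

Lemma PHE m a b : 0 < m -> 0 < a -> 0 < b ->
  (PH (J m) a b <-> gcdn a m = gcdn b m).
Proof.
move=> m0 a0 b0; split.
  case=> _ [_ H].
  have qa : 0 < m %/ gcdn a m by rewrite divn_gt0 ?gcd_pos // dvdn_leq // dvdn_gcdr.
  have qb : 0 < m %/ gcdn b m by rewrite divn_gt0 ?gcd_pos // dvdn_leq // dvdn_gcdr.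
  have d1 : m %/ gcdn b m %| m %/ gcdn a m.
    have hr : resid (J m) a (m %/ gcdn a m) 1 by apply/residE => //; rewrite muln1.
    by have [_ _] := proj1 (residE _ _ _ _ m0 b0) (proj1 (H _ _) hr); rewrite muln1.
  have d2 : m %/ gcdn a m %| m %/ gcdn b m.
    have hr : resid (J m) b (m %/ gcdn b m) 1 by apply/residE => //; rewrite muln1.
    by have [_ _] := proj1 (residE _ _ _ _ m0 a0) (proj2 (H _ _) hr); rewrite muln1.
  have e : m %/ gcdn a m = m %/ gcdn b m by apply/eqP; rewrite eqn_dvd d1 d2.
  apply/eqP; rewrite -(eqn_pmul2l qa) {2}e !divnK ?dvdn_gcdr //.
move=> e; split => //; split => //; move=> x y.
by rewrite !residE // e.
Qed.

Theorem theorem6 (m : nat) : 0 < m -> quot_card (J m) (d m).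
Proof.
move=> m0.
set s := divisors m.
have spos : forall i, 0 < nth 1 s i.
  move=> i; case: (ltnP i (size s)) => hi; last by rewrite nth_default.
  have : nth 1 s i \in s by apply: mem_nth.
  by rewrite -dvdn_divisors // => /dvdn_gt0; apply.
have sdiv : forall i, i < size s -> nth 1 s i %| m.
  by move=> i hi; rewrite dvdn_divisors // mem_nth.
have clsE : forall a b, 0 < a -> 0 < b -> gcdn a m = gcdn b m -> cls (J m) a = cls (J m) b.
  move=> a b a0 b0 e; apply: functional_extensionality => c.
  apply: propositional_extensionality; rewrite /cls; split.
  - move=> h; have [_ [c0 _]] := h.
    by apply/PHE => //; rewrite -e; apply/PHE.
  - move=> h; have [_ [c0 _]] := h.
    by apply/PHE => //; rewrite e; apply/PHE.
exists (fun i : 'I_(d m) => cls (J m) (nth 1 s i)); split; last split.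
- move=> i j eij.
  have hi : i < size s by apply: ltn_ord.
  have hj : j < size s by apply: ltn_ord.
  have hp : PH (J m) (nth 1 s i) (nth 1 s j).
    have hf := f_equal (fun P : nat -> Prop => P (nth 1 s j)) eij.
    simpl in hf; rewrite /cls in hf; rewrite hf.
    by apply/PHE; rewrite ?spos.
  have := proj1 (PHE _ _ _ m0 (spos _) (spos _)) hp.
  rewrite !(gcdn_idPl (sdiv _ _)) // => e.
  apply: val_inj => /=.
  by rewrite -(index_uniq 1 hi (divisors_uniq m)) e index_uniq // divisors_uniq.
- by move=> i; exists (nth 1 s i); split => //; apply: spos.
- move=> a a0.
  have gin : gcdn a m \in s by rewrite -dvdn_divisors // dvdn_gcdr.
  have hi : index (gcdn a m) s < d m by rewrite index_mem.
  exists (Ordinal hi) => /=.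
  apply: clsE => //.
  by rewrite nth_index // (gcdn_idPl (dvdn_gcdr _ _)).
Qed.
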